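(* Let $K$ be a division ring, $G$ a group, and suppose nonzero elements $a,b\in K[G]$ satisfy $ab=0$ and both contain the identity element of $G$ in their supports. Then there is a subgroup $H$ of $G$ such that, letting $c=E^G_H(a)$ and $d=E^G_H(b)$: (i) $cd=0$; (ii) $c\ne0$ and $d\ne0$; (iii) the support of $c$ generates $H$; (iv) the support of $d$ generates $H$.
   Context: $K[G]$ is the group ring; the support of an element is the set of group elements with nonzero coefficient. For a subgroup $H\le G$, $E^G_H:K[G]\to K[H]$ is the $K$-linear map with $E^G_H(g)=g$ for $g\in H$ and $E^G_H(g)=0$ for $g\notin H$. *)

(* Defs.v *)
From HB Require Import structures.
From mathcomp Require Import all_boot all_order all_algebra.
From mathcomp Require Import finmap.
Set Implicit Arguments. Unset Strict Implicit. Unset Printing Implicit Defensive.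
Import GRing.Theory.
Local Open Scope ring_scope.
Local Open Scope fset_scope.

Notation grpring K G := {fsfun G -> K with 0}.

Section GroupRing.
Variables (K : unitRingType) (G : groupType).

Definition grmul (a b : grpring K G) (g : G) : K :=
  \sum_(h <- finsupp a) a h * b (h^-1 * g)%g.

Definition grmul_eq0 (a b : grpring K G) : Prop := forall g : G, grmul a b g = 0.

Definition gr_nonzero (a : grpring K G) : Prop := exists g : G, a g != 0.

(* E^G_H : K[G] -> K[H] (K[H] viewed inside K[G]). *)
Definition grE (H : {pred G}) (a : grpring K G) : grpring K G :=
  [fsfun g in finsupp a => if g \in H then a g else 0 | 0].

Definition subgroup (H : {pred G}) : Prop := group_closed H.

Definition generates (S : {pred G}) (H : {pred G}) : Prop :=
  [/\ subgroup H, {subset S <= H} &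
      forall H' : {pred G}, subgroup H' -> {subset S <= H'} -> {subset H <= H'}].

End GroupRing.

Definition division_ring (K : unitRingType) : Prop :=
  forall x : K, x != 0 -> x \is a GRing.unit.

(* Main.v *)
Require Import Defs.
From HB Require Import structures.
From mathcomp Require Import all_boot all_order all_algebra.
From mathcomp Require Import finmap.
From mathcomp Require Import boolp.
Local Open Scope ring_scope.
Local Open Scope fset_scope.

Import GRing.Theory.
Set Implicit Arguments.
Section Aux.
Variables (K : unitRingType) (G : groupType).
Implicit Types (x y : grpring K G) (H : {pred G}).

Lemma g1 H : subgroup H -> (1%g : G) \in H.
Proof. by case. Qed.

Lemma gV H {u : G} : subgroup H -> u \in H -> (u^-1)%g \in H.
Proof. by move=> /group_closedV; apply. Qed.

Lemma gM H {u v : G} : subgroup H -> u \in H -> v \in H -> (u * v)%g \in H.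
Proof. by move=> /group_closedM; apply. Qed.

Lemma gLM H (h g : G) : subgroup H -> h \in H -> ((h^-1 * g)%g \in H) = (g \in H).
Proof.
move=> sH hH; apply/idP/idP => P.
  by rewrite -(mulVKg h g); apply: gM.
by apply: gM => //; apply: gV.
Qed.

Lemma gLM' H (h g : G) : subgroup H -> g \in H -> ((h^-1 * g)%g \in H) = (h \in H).
Proof.
move=> sH gH; apply/idP/idP => P; last by apply: gM => //; apply: gV.
have := gV sH (gM sH P (gV sH gH)).
by rewrite mulgK invgK.
Qed.

Lemma notsupp x (k : G) : k \notin finsupp x -> x k = 0.
Proof. by rewrite mem_finsupp negbK => /eqP. Qed.

Lemma grE_val H x g : grE H x g = if g \in H then x g else 0.
Proof.
rewrite /grE fsfunE; case: ifP => // /negbT /notsupp ->.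
by case: ifP.
Qed.

Lemma suppE H x h : h \in finsupp (grE H x) -> (h \in H) && (h \in finsupp x).
Proof.
rewrite !mem_finsupp grE_val; case: ifP => //; by rewrite eqxx.
Qed.

Lemma suppE_sub H x : finsupp (grE H x) `<=` finsupp x.
Proof. by apply/fsubsetP => h /suppE /andP[]. Qed.

Lemma Eid H x : {subset finsupp x <= H} -> grE H x = x.
Proof.
move=> sx; apply/fsfunP => g; rewrite grE_val; case: ifP => // gH.
apply/esym/notsupp; apply/negP => /sx; by rewrite gH.
Qed.

Lemma lemB H x y g : subgroup H -> {subset finsupp x <= H} ->
  grmul x (grE H y) g = if g \in H then grmul x y g else 0.
Proof.
move=> sH sx; rewrite /grmul; case: ifP => gH.
  apply: eq_bigr => h _.
  case hs: (h \in finsupp x); last by rewrite notsupp ?hs // !mul0r.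
  by rewrite grE_val gLM ?gH // sx.
apply: big1 => h _.
case hs: (h \in finsupp x); last by rewrite notsupp ?hs // !mul0r.
by rewrite grE_val gLM ?gH ?mulr0 // sx.
Qed.

Lemma lemA H x y g : subgroup H -> {subset finsupp y <= H} ->
  grmul (grE H x) y g = if g \in H then grmul x y g else 0.
Proof.
move=> sH sy; rewrite /grmul (big_fset_incl _ (suppE_sub H x)); last first.
  by move=> h _ /notsupp ->; rewrite mul0r.
case: ifP => gH.
  apply: eq_bigr => h _; rewrite grE_val; case: ifP => // hH.
  rewrite (@notsupp y) ?mulr0 //; apply/negP => /sy.
  by rewrite gLM' ?hH.
apply: big1 => h _; rewrite grE_val; case: ifP => hH; last by rewrite mul0r.
rewrite (@notsupp y) ?mulr0 //; apply/negP => /sy.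
by rewrite gLM ?gH.
Qed.

Definition gen (S : {pred G}) : {pred G} :=
  fun g => `[< forall H', subgroup H' -> {subset S <= H'} -> g \in H' >].

Lemma gen_sub S : {subset S <= gen S}.
Proof. by move=> g gS; apply/asboolP => H' _; apply. Qed.

Lemma gen_min S H' : subgroup H' -> {subset S <= H'} -> {subset gen S <= H'}.
Proof. by move=> sH sS g /asboolP; apply. Qed.

Lemma gen_group S : subgroup (gen S).
Proof.
split; first by apply/asboolP => H' [] .
move=> u v /asboolP uH /asboolP vH; apply/asboolP => H' sH sS.
by apply: gM => //; [apply: uH | apply: gV => //; apply: vH].
Qed.

Lemma gen_generates S : generates S (gen S).
Proof. split; [exact: gen_group | exact: gen_sub | exact: gen_min]. Qed.

Lemma supp_in H x : {subset finsupp (grE H x) <= H}.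
Proof. by move=> h /suppE /andP[]. Qed.

Lemma Egen H x : subgroup H ->
  grE (gen (mem (finsupp (grE H x)))) x = grE H x.
Proof.
move=> sH; set L := gen _.
have LH : {subset L <= H} by apply: gen_min => //; apply: supp_in.
apply/fsfunP => g; rewrite !grE_val; case: ifP => gL; first by rewrite LH.
case: ifP => // gH; apply/esym/eqP; apply: contraFT gL => xg.
apply: gen_sub; rewrite /= mem_finsupp grE_val gH //.
Qed.

Lemma Esub H L x : {subset L <= H} -> grE L (grE H x) = grE L x.
Proof.
by move=> LH; apply/fsfunP => g; rewrite !grE_val; case: ifP => // /LH ->.
Qed.

End Aux.
Unset Implicit Arguments.
Arguments gen {G} S.

Theorem proposition2p7 (K : unitRingType) (G : groupType)
    (HK : division_ring K) (a b : grpring K G) :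
  gr_nonzero a -> gr_nonzero b -> grmul_eq0 a b ->
  (1%g : G) \in finsupp a -> (1%g : G) \in finsupp b ->
  exists H : {pred G},
    subgroup H /\
    let c := grE H a in
    let d := grE H b in
    [/\ grmul_eq0 c d,
        gr_nonzero c /\ gr_nonzero d,
        generates (mem (finsupp c)) H &
        generates (mem (finsupp d)) H].
Proof.
move=> _ _ ab0 a1 b1.
pose cand (H : {pred G}) := subgroup H /\ grmul_eq0 (grE H a) (grE H b).
pose n (H : {pred G}) := (#|` finsupp (grE H a)| + #|` finsupp (grE H b)|)%N.
set goal := exists H : {pred G}, _.
have step : forall H, cand H -> (forall H', cand H' -> (n H' < n H)%N -> goal) -> goal.
  move=> H [sH cd0] IH.
  set c := grE H a; set d := grE H b.
  set H1 := gen (mem (finsupp c)).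
  have sH1 : subgroup H1 by apply: gen_group.
  have H1H : {subset H1 <= H} by apply: gen_min => //; apply: supp_in.
  have E1a : grE H1 a = c by apply: Egen.
  have E1b : grE H1 b = grE H1 d by rewrite Esub.
  have cH1 : {subset finsupp c <= H1} by move=> h hc; apply: gen_sub.
  have cand1 : cand H1.
    split=> // g; rewrite E1a E1b lemB //; case: ifP => //; apply: cd0.
  have [lt1|ge1] := ltnP (n H1) (n H); first exact: IH lt1.
  have dH1 : {subset finsupp d <= H1}.
    have sub := suppE_sub H1 d.
    have eqs : finsupp (grE H1 d) = finsupp d.
      apply/eqP; rewrite -(fsubset_leqif_cards sub); move: ge1.
      rewrite /n E1a E1b -/c -/d leq_add2l => h.
      by rewrite eqn_leq h fsubset_leq_card.
    by move=> h; rewrite -eqs => /suppE /andP[].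
  set H2 := gen (mem (finsupp d)).
  have sH2 : subgroup H2 by apply: gen_group.
  have H2H : {subset H2 <= H} by apply: gen_min => //; apply: supp_in.
  have E2b : grE H2 b = d by apply: Egen.
  have E2a : grE H2 a = grE H2 c by rewrite Esub.
  have dH2 : {subset finsupp d <= H2} by move=> h hc; apply: gen_sub.
  have cand2 : cand H2.
    split=> // g; rewrite E2a E2b lemA //; case: ifP => //; apply: cd0.
  have [lt2|ge2] := ltnP (n H2) (n H); first exact: IH lt2.
  have cH2 : {subset finsupp c <= H2}.
    have sub := suppE_sub H2 c.
    have eqs : finsupp (grE H2 c) = finsupp c.
      apply/eqP; rewrite -(fsubset_leqif_cards sub); move: ge2.
      rewrite /n E2b E2a -/c -/d leq_add2r => h.
      by rewrite eqn_leq h fsubset_leq_card.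
    by move=> h; rewrite -eqs => /suppE /andP[].
  have H12 : {subset H1 <= H2} by apply: gen_min.
  have E1b' : grE H1 b = d by rewrite E1b Eid.
  exists H1; split=> //; cbv zeta; rewrite E1a E1b'; split=> //.
  - split; exists 1%g; rewrite /c /d grE_val (g1 sH) -mem_finsupp //.
  - exact: gen_generates.
  - split=> // H' sH' dH'; move=> h /H12; exact: gen_min.
have main : forall m H, cand H -> (n H <= m)%N -> goal.
  elim=> [|m IHm] H cH lem.
    apply: (step H cH) => H' _; by rewrite ltnNge (leq_trans lem).
  apply: (step H cH) => H' cH' lt; apply: (IHm H' cH').
  by rewrite -ltnS (leq_trans lt).
apply: (main _ predT _ (leqnn _)); split.
  by split=> // u v _ _.
by move=> g; rewrite !Eid //.
Qed.
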